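(* Let $n\ge4$, $0<\alpha_2,\alpha_3<1$, $\alpha_1=1-\alpha_2-\alpha_3$, $\lambda^*=\big(\frac{n-1+\alpha_1}{n},\frac{\alpha_2}{n},\frac{\alpha_3}{n}\big)$. Then $$|l_{(n-2,1,1)}(\lambda^* )|\le\frac{2}{e(\ln n-1)}\binom{n}{n-2}.$$
   Context: For an integer $n\ge1$ and $i=(i_1,i_2,i_3)\in\mathbb{Z}_+^3$ with $i_1+i_2+i_3=n$, $l_i(\lambda)=\prod_{s=1}^{3}\frac{1}{i_s!}\prod_{t=0}^{i_s-1}(n\lambda_s-t)$ for $\lambda=(\lambda_1,\lambda_2,\lambda_3)$ (Lagrange fundamental polynomials for the equally spaced nodes $i/n$ of a triangle in barycentric coordinates). *)

(* Defs.v *)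
From Stdlib Require Import Reals Arith.
Open Scope R_scope.

Fixpoint fall (x : R) (k : nat) : R :=
  match k with
  | O => 1
  | S k' => fall x k' * (x - INR k')
  end.

(* Lagrange fundamental polynomial l_i(lambda) for the equally spaced nodes
   i/n of a triangle, i = (i1,i2,i3), lambda = (l1,l2,l3) barycentric. *)
Definition lagr (n : nat) (i : nat * nat * nat) (lam : R * R * R) : R :=
  let '(i1, i2, i3) := i in
  let '(l1, l2, l3) := lam in
  (fall (INR n * l1) i1 / INR (Factorial.fact i1)) *
  (fall (INR n * l2) i2 / INR (Factorial.fact i2)) *
  (fall (INR n * l3) i3 / INR (Factorial.fact i3)).

(* Main.v *)
Require Import Defs.
From Stdlib Require Import Reals Lra Lia.
Open Scope R_scope.

Lemma exp_le (x y : R) : x <= y -> exp x <= exp y.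
Proof. intros [H|H]; [left; apply exp_increasing; auto | subst; lra]. Qed.

Lemma ln_le' (x y : R) : 0 < x -> x <= y -> ln x <= ln y.
Proof. intros Hx [H|H]; [left; apply ln_increasing; auto | subst; lra]. Qed.

Lemma fall_shift (k : nat) : forall x, fall (x + 1) (S k) = (x + 1) * fall x k.
Proof.
  induction k as [|k IH]; intros x.
  - simpl. lra.
  - change (fall (x+1) (S (S k))) with (fall (x+1) (S k) * (x+1 - INR (S k))).
    change (fall x (S k)) with (fall x k * (x - INR k)).
    rewrite IH. rewrite S_INR. ring.
Qed.

Lemma step_bound (b k : R) : 0 < b -> 2 < k ->
  1 - b / k <= exp (- b * (ln (k + 1) - ln k)).
Proof.
  intros Hb Hk.
  assert (Hl : ln (k + 1) - ln k <= / k).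
  { assert (E : k + 1 = k * (1 + / k)) by (field; lra).
    rewrite E, ln_mult by (try apply Rmult_lt_0_compat; try lra;
                           assert (0 < / k) by (apply Rinv_0_lt_compat; lra); lra).
    assert (0 < / k) by (apply Rinv_0_lt_compat; lra).
    rewrite <- (ln_exp (/ k)) at 2.
    assert (ln (1 + / k) <= ln (exp (/ k))).
    { apply ln_le'. lra. apply exp_ineq1_le. }
    lra. }
  eapply Rle_trans; [| apply exp_le].
  - replace (1 - b / k) with (1 + - (b * / k)) by (unfold Rdiv; ring).
    apply exp_ineq1_le.
  - assert (b * (ln (k + 1) - ln k) <= b * / k) by (apply Rmult_le_compat_l; lra). lra.
Qed.

Lemma main_bound (b : R) : 0 < b < 2 -> forall m : nat,
  0 <= fall (INR m + 2 - b) m / INR (Factorial.fact m) <=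
  (INR m + 2) * (INR m + 1) / 2 * exp (- b * (ln (INR m + 3) - ln 3)).
Proof.
  intros Hb m. induction m as [|m IH].
  - simpl. replace (0+3) with 3 by ring. rewrite Rminus_diag, Rmult_0_r, exp_0. lra.
  - assert (Hm := pos_INR m).
    replace (INR (S m) + 2 - b) with ((INR m + 2 - b) + 1) by (rewrite S_INR; ring).
    rewrite fall_shift.
    change (Factorial.fact (S m)) with (S m * Factorial.fact m)%nat.
    rewrite mult_INR, !S_INR.
    assert (Hf : 0 < INR (Factorial.fact m)) by (apply lt_0_INR, Factorial.lt_O_fact).
    set (F := fall (INR m + 2 - b) m) in *.
    set (f := INR (Factorial.fact m)) in *.
    replace ((INR m + 2 - b + 1) * F / ((INR m + 1) * f))
      with ((INR m + 3 - b) / (INR m + 1) * (F / f)) by (field; lra).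
    assert (Hs := step_bound b (INR m + 3) ltac:(lra) ltac:(lra)).
    replace (INR m + 1 + 3) with (INR m + 3 + 1) by ring.
    replace (- b * (ln (INR m + 3 + 1) - ln 3))
      with (- b * (ln (INR m + 3) - ln 3) + - b * (ln (INR m + 3 + 1) - ln (INR m + 3))) by ring.
    rewrite exp_plus.
    set (E1 := exp (- b * (ln (INR m + 3) - ln 3))) in *.
    set (E2 := exp (- b * (ln (INR m + 3 + 1) - ln (INR m + 3)))) in *.
    assert (0 < E1) by apply exp_pos.
    assert (0 <= (INR m + 3 - b) / (INR m + 1)) by (unfold Rdiv; apply Rmult_le_pos; [lra | left; apply Rinv_0_lt_compat; lra]).
    assert (0 <= (INR m + 2) * (INR m + 1) / 2) by (apply Rmult_le_pos; [apply Rmult_le_pos|]; lra).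
    split.
    + apply Rmult_le_pos; lra.
    + replace ((INR m + 3 - b) / (INR m + 1)) with ((INR m + 3) / (INR m + 1) * (1 - b / (INR m + 3))) by (field; lra).
      assert (0 <= 1 - b / (INR m + 3)).
      { assert (b / (INR m + 3) <= 1). { apply Rmult_le_reg_r with (INR m + 3). lra. unfold Rdiv. rewrite Rmult_assoc, Rinv_l by lra. lra. } lra. }
      assert (0 < (INR m + 3) / (INR m + 1)) by (apply Rdiv_lt_0_compat; lra).
      apply Rle_trans with ((INR m + 3) / (INR m + 1) * (1 - b / (INR m + 3)) *
                            ((INR m + 2) * (INR m + 1) / 2 * E1)).
      * apply Rmult_le_compat_l; [apply Rmult_le_pos; lra | lra].
      * apply Rle_trans with ((INR m + 3) / (INR m + 1) * E2 * ((INR m + 2) * (INR m + 1) / 2 * E1)).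
        -- apply Rmult_le_compat_r. apply Rmult_le_pos; lra.
           apply Rmult_le_compat_l; lra.
        -- right. field. lra.
Qed.

Lemma key_ineq (b L M : R) : 0 < b -> 0 < M -> M <= 4 * L ->
  b * exp (- b * L) <= 4 / (exp 1 * M).
Proof.
  intros Hb HM HL.
  assert (He : 0 < exp 1) by apply exp_pos.
  set (x := b * L).
  assert (Hx : exp 1 * x <= exp x).
  { assert (H := exp_ineq1_le (x - 1)).
    replace x with (1 + (x - 1)) at 2 by ring. rewrite exp_plus.
    assert (0 <= exp 1 * (x - (1 + (x - 1))) ) by (replace (x - (1 + (x - 1))) with 0 by ring; lra).
    nra. }
  assert (Hex : 0 < exp x) by apply exp_pos.
  replace (- b * L) with (- x) by (unfold x; ring).
  rewrite exp_Ropp.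
  apply Rmult_le_reg_r with (exp 1 * M * exp x).
  { apply Rmult_lt_0_compat; [apply Rmult_lt_0_compat|]; lra. }
  replace (b * / exp x * (exp 1 * M * exp x)) with (b * exp 1 * M) by (field; lra).
  replace (4 / (exp 1 * M) * (exp 1 * M * exp x)) with (4 * exp x) by (field; lra).
  assert (b * M <= 4 * x) by (unfold x; nra).
  nra.
Qed.

Theorem lemma24 (n : nat) (a1 a2 a3 : R) :
  (4 <= n)%nat ->
  0 < a2 < 1 -> 0 < a3 < 1 ->
  a1 = 1 - a2 - a3 ->
  Rabs (lagr n ((n - 2)%nat, 1%nat, 1%nat)
          ((INR n - 1 + a1) / INR n, a2 / INR n, a3 / INR n))
  <= 2 / (exp 1 * (ln (INR n) - 1)) * Binomial.C n (n - 2).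
Proof.
  intros Hn H2 H3 H1.
  destruct n as [|[|m]]; try lia.
  replace (S (S m) - 2)%nat with m by lia.
  assert (Hm4 : (2 <= m)%nat) by lia.
  apply le_INR in Hm4. simpl INR in Hm4 at 1.
  assert (HN : INR (S (S m)) = INR m + 2) by (rewrite !S_INR; ring).
  set (b := a2 + a3).
  assert (Hb : 0 < b < 2) by (unfold b; lra).
  unfold lagr.
  rewrite HN.
  replace ((INR m + 2) * ((INR m + 2 - 1 + a1) / (INR m + 2))) with (INR m + 2 - b)
    by (unfold b; rewrite H1; field; lra).
  replace ((INR m + 2) * (a2 / (INR m + 2))) with a2 by (field; lra).
  replace ((INR m + 2) * (a3 / (INR m + 2))) with a3 by (field; lra).
  change (fall a2 1) with (1 * (a2 - INR 0)).
  change (fall a3 1) with (1 * (a3 - INR 0)).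
  change (Factorial.fact 1) with 1%nat. simpl INR at 3 4 5 6.
  assert (HC : Binomial.C (S (S m)) m = (INR m + 2) * (INR m + 1) / 2).
  { unfold Binomial.C. replace (S (S m) - m)%nat with 2%nat by lia.
    change (Factorial.fact (S (S m))) with (S (S m) * (S m * Factorial.fact m))%nat.
    rewrite !mult_INR, !S_INR. simpl (INR (Factorial.fact 2)).
    assert (0 < INR (Factorial.fact m)) by (apply lt_0_INR, Factorial.lt_O_fact).
    field. lra. }
  rewrite HC.
  destruct (main_bound b Hb m) as [F0 F1].
  set (F := fall (INR m + 2 - b) m / INR (Factorial.fact m)) in *.
  set (E := exp (- b * (ln (INR m + 3) - ln 3))) in *.
  set (K := (INR m + 2) * (INR m + 1) / 2) in *.
  assert (HK : 0 < K) by (unfold K; apply Rmult_lt_0_compat; [apply Rmult_lt_0_compat|]; lra).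
  assert (HE : 0 < E) by apply exp_pos.
  replace (F * (1 * (a2 - 0) / 1) * (1 * (a3 - 0) / 1)) with (F * (a2 * a3)) by field.
  rewrite Rabs_right by (apply Rle_ge, Rmult_le_pos; nra).
  assert (HM : 1 < ln (INR m + 2)).
  { rewrite <- (ln_exp 1) at 1. apply ln_increasing. apply exp_pos.
    assert (H := exp_le_3). lra. }
  assert (HL : ln (INR m + 2) - 1 <= 4 * (ln (INR m + 3) - ln 3)).
  { assert (A : ln (INR m + 2) <= ln (INR m + 3)) by (apply ln_le'; lra).
    assert (B : 4 * ln 3 <= 3 * ln (INR m + 3)).
    { replace 4 with (INR 4) by (simpl; ring). replace 3 with (INR 3) at 2 by (simpl; ring).
      rewrite <- !ln_pow by lra. apply ln_le'. simpl; lra. simpl. nra. }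
    lra. }
  assert (Kb := key_ineq b (ln (INR m + 3) - ln 3) (ln (INR m + 2) - 1) ltac:(lra) ltac:(lra) HL).
  fold E in Kb.
  assert (Hab : a2 * a3 <= b / 2) by (unfold b; nra).
  assert (Hpos : 0 < exp 1 * (ln (INR m + 2) - 1)) by (apply Rmult_lt_0_compat; [apply exp_pos|lra]).
  apply Rle_trans with (K * E * (a2 * a3)).
  { apply Rmult_le_compat_r; nra. }
  apply Rle_trans with (K * (E * (b / 2))).
  { rewrite Rmult_assoc. apply Rmult_le_compat_l; [lra|]. apply Rmult_le_compat_l; lra. }
  rewrite (Rmult_comm (2 / _) K). apply Rmult_le_compat_l; [lra|].
  replace (2 / (exp 1 * (ln (INR m + 2) - 1))) with (4 / (exp 1 * (ln (INR m + 2) - 1)) / 2)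
    by (field; split; [lra | apply Rgt_not_eq, exp_pos]).
  lra.
Qed.
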